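(* Let $X$ be a $2$-dimensional regular polyhedral Banach space with $2n$ extreme points ($n\ge2$), and let $x\in\operatorname{Ext}B_X$. Then $$\operatorname{diam}J(x)=\mathcal{E}(X)=\begin{cases}2\tan\frac{\pi}{2n}&\text{if } n \text{ is even},\\[2pt] 2\tan\frac{\pi}{2n}\,\sin\frac{(n-1)\pi}{2n}&\text{if } n\text{ is odd}.\end{cases}$$
   Context: A $2$-dimensional regular polyhedral Banach space with $2n$ extreme points is $\mathbb{R}^2$ equipped with the norm whose closed unit ball $B_X$ is a (centrally symmetric, centered at the origin) polygon with $2n$ vertices, all of whose edges have the same Euclidean length and all of whose interior angles are equal. $\operatorname{Ext}B_X$ is the set of extreme points (vertices) of $B_X$. For $x\neq\theta$, $J(x)=\{f\in S_{X^*}:f(x)=\|x\|\}$, $\operatorname{diam}J(x)=\sup_{f,g\in J(x)}\|f-g\|$ (dual norm), and $\mathcal{E}(X)=\sup\{\operatorname{diam}J(x):x\in S_X\}$. *)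

(* Defs.v *)
From HB Require Import structures.
From mathcomp Require Import all_boot all_order all_algebra.
From mathcomp Require Import all_classical all_reals all_analysis.
Set Implicit Arguments. Unset Strict Implicit. Unset Printing Implicit Defensive.
Import Order.TTheory GRing.Theory Num.Theory.
Local Open Scope classical_set_scope.
Local Open Scope ring_scope.

Section Poly.
Variable R : realType.

Definition rvert (n : nat) (r th : R) (k : nat) : R * R :=
  (r * cos (th + k%:R * pi / n%:R), r * sin (th + k%:R * pi / n%:R)).

Definition polyball (n : nat) (r th : R) : set (R * R) :=
  [set p | exists w : 'I_(2 * n) -> R,
     (forall i, 0 <= w i) /\ \sum_(i < 2 * n) w i = 1 /\
     p.1 = \sum_(i < 2 * n) w i * (rvert n r th i).1 /\
     p.2 = \sum_(i < 2 * n) w i * (rvert n r th i).2].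

Definition gauge (B : set (R * R)) (x : R * R) : R :=
  inf [set t : R | 0 < t /\ B (x.1 / t, x.2 / t)].

(* A functional f on R^2 is represented by the pair (f.1, f.2). *)
Definition app (f x : R * R) : R := f.1 * x.1 + f.2 * x.2.

Definition dnorm (B : set (R * R)) (f : R * R) : R :=
  sup [set `|app f x| | x in [set x | gauge B x <= 1]].

Definition Jset (B : set (R * R)) (x : R * R) : set (R * R) :=
  [set f | dnorm B f = 1 /\ app f x = gauge B x].

Definition diamJ (B : set (R * R)) (x : R * R) : R :=
  sup [set d | exists f g, Jset B x f /\ Jset B x g /\
                          d = dnorm B (f.1 - g.1, f.2 - g.2)].

Definition EX (B : set (R * R)) : R :=
  sup [set diamJ B x | x in [set x | gauge B x = 1]].

Definition extreme (B : set (R * R)) (x : R * R) : Prop :=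
  B x /\ forall (y z : R * R) (t : R), B y -> B z -> 0 < t -> t < 1 ->
    x = (t * y.1 + (1 - t) * z.1, t * y.2 + (1 - t) * z.2) -> y = z.

End Poly.

(* Main.v *)
Require Import Defs.
From HB Require Import structures.
From mathcomp Require Import all_boot all_order all_algebra.
From mathcomp Require Import all_classical all_reals all_analysis.
From mathcomp Require Import ring lra zify.
Import Order.TTheory GRing.Theory Num.Theory.
Local Open Scope classical_set_scope.
Local Open Scope ring_scope.
Set Implicit Arguments. Unset Strict Implicit. Unset Printing Implicit Defensive.


Lemma cos_npi (R : realType) (q : nat) (x : R) : `|cos (q%:R * pi + x)| = `|cos x|.
Proof.
elim: q => [|q IH]; first by rewrite mul0r add0r.
by rewrite -natr1 mulrDl mul1r addrAC cosDpi normrN.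
Qed.

Lemma cos_le_mono (R : realType) (x y : R) : 0 <= x -> x <= y -> y <= pi -> cos y <= cos x.
Proof.
move=> x0 xy ypi; have xpi : x <= pi by apply: le_trans xy ypi.
have y0 : 0 <= y by apply: le_trans x0 xy.
rewrite leNgt ltr_cos ?in_itv /= ?x0 ?y0 ?xpi ?ypi // -leNgt //.
Qed.

Lemma cos_odd (R : realType) (n m : nat) : (0 < n)%N -> odd m ->
  `|cos (m%:R * (pi / (2*n)%:R))| <= cos (pi / (2*n)%:R :> R).
Proof.
move=> n0 om.
set d := (2 * n)%N.
have d0 : (0 < d)%N by rewrite /d muln_gt0.
have d0R : (d%:R : R) != 0 by rewrite pnatr_eq0 -lt0n.
set a := pi / d%:R.
have a0 : 0 < a by rewrite divr_gt0 ?pi_gt0 // ltr0n.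
have dpi : d%:R * a = pi by rewrite /a mulrC divfK.
rewrite (divn_eq m d) natrD natrM mulrDl -mulrA dpi cos_npi.
set m' := (m %% d)%N.
have om' : odd m'.
  by move: om; rewrite {1}(divn_eq m d) oddD oddM /d oddM /= andbF.
have m'd : (m' < d)%N by rewrite ltn_mod.
have m'1 : (1 <= m')%N by case: (m') om'.
have m'3 : (m'%:R : R) <= d%:R - 1.
  by rewrite lerBrDr natr1 ler_nat.
have a1 : a <= m'%:R * a by rewrite ler_pMl // ler1n.
have a2 : m'%:R * a <= pi - a.
  by rewrite -dpi -[X in _ - X]mul1r -mulrBl ler_pM2r.
rewrite ler_norml; apply/andP; split.
  have -> : - cos a = cos (pi - a) by rewrite addrC cosDpi cosN.
  apply: cos_le_mono => //; first by rewrite (le_trans _ a1) ?ltW.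
  by rewrite lerBlDl lerDr ltW.
apply: cos_le_mono => //; first exact: ltW.
by apply: le_trans a2 _; rewrite lerBlDl lerDr ltW.
Qed.


Definition ang (R : realType) (n : nat) (th : R) (k : nat) : R := th + k%:R * pi / n%:R.

Definition Mx (R : realType) (n : nat) (r th : R) (f : R * R) : R :=
  \big[Num.max/0]_(i < 2 * n) `|app f (rvert n r th i)|.

Lemma app_rvert (R : realType) n (r th : R) f k :
  app f (rvert n r th k) = r * (f.1 * cos (ang n th k) + f.2 * sin (ang n th k)).
Proof. rewrite /app /rvert /ang /=; ring. Qed.

Lemma decomp (R : realType) (a b u v : R) : u * cos a + v * sin a =
  (u * cos b + v * sin b) * cos (a - b) + (v * cos b - u * sin b) * sin (a - b).
Proof.
have h := cos2Dsin2 b.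
rewrite cosB sinB -[LHS]mulr1 -h; ring.
Qed.

Lemma angB (R : realType) n (th : R) k m : (0 < n)%N ->
  ang n th k - ang n th m = (k%:R - m%:R) * (2 * (pi / (2 * n)%:R)).
Proof.
move=> n0; have nz : (n%:R : R) != 0 by rewrite pnatr_eq0 -lt0n.
rewrite /ang natrM; field; by rewrite nz.
Qed.

Lemma Vshift (R : realType) n (r th : R) k : (0 < n)%N ->
  rvert n r th (k + n) = (- (rvert n r th k).1, - (rvert n r th k).2).
Proof.
move=> n0; have nz : (n%:R : R) != 0 by rewrite pnatr_eq0 -lt0n.
have E : th + (k + n)%:R * pi / n%:R = (th + k%:R * pi / n%:R) + pi.
  rewrite natrD; field; by rewrite nz.
by rewrite /rvert /= E cosDpi sinDpi !mulrN.
Qed.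

Lemma app_neg (R : realType) (f v : R * R) : app f (- v.1, - v.2) = - app f v.
Proof. rewrite /app /=; ring. Qed.

Lemma Mx_ge (R : realType) n (r th : R) f (i : 'I_(2 * n)) :
  `|app f (rvert n r th i)| <= Mx n r th f.
Proof. exact: (le_bigmax _ (fun i : 'I_(2 * n) => `|app f (rvert n r th i)|) i). Qed.

Lemma Mx_ge0 (R : realType) n (r th : R) f : 0 <= Mx n r th f.
Proof. by rewrite /Mx bigmax_idl le_max lexx. Qed.

Lemma Vall (R : realType) n (r th : R) f k : (0 < n)%N ->
  `|app f (rvert n r th k)| <= Mx n r th f.
Proof.
move=> n0; elim/ltn_ind: k => k IH.
case: (ltnP k (2 * n)) => hk.
  exact: (@Mx_ge R n r th f (Ordinal hk)).
have -> : k = ((k - n) + n)%N by lia.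
rewrite Vshift // app_neg normrN; apply: IH; lia.
Qed.


Lemma sum_ind (R : realType) m (i : 'I_m) (F : 'I_m -> R) :
  \sum_(j < m) (j == i)%:R * F j = F i.
Proof.
rewrite (bigD1 i) //= eqxx mul1r big1 ?addr0 // => j /negbTE ->.
by rewrite mul0r.
Qed.

Lemma sum4 (R : realType) m (i0 i1 i2 i3 : 'I_m) (c0 c1 c2 c3 : R) (F : 'I_m -> R) :
  \sum_(j < m) (c0 * (j == i0)%:R + c1 * (j == i1)%:R + c2 * (j == i2)%:R
     + c3 * (j == i3)%:R) * F j = c0 * F i0 + c1 * F i1 + c2 * F i2 + c3 * F i3.
Proof.
under eq_bigr => j _ do rewrite !mulrDl -!mulrA.
by rewrite !big_split /= -!mulr_sumr !sum_ind.
Qed.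

Lemma conv_bound (R : realType) m (w a : 'I_m -> R) (M : R) :
  (forall i, 0 <= w i) -> \sum_(i < m) w i = 1 -> (forall i, `|a i| <= M) ->
  `|\sum_(i < m) w i * a i| <= M.
Proof.
move=> w0 w1 aM.
apply: le_trans (ler_norm_sum _ _ _) _.
apply: le_trans (_ : \sum_(i < m) w i * M <= M).
  apply: ler_sum => i _; rewrite normrM ger0_norm //.
  by apply: ler_wpM2l.
by rewrite -mulr_suml w1 mul1r.
Qed.

Lemma inB_bound (R : realType) n (r th : R) f p :
  polyball n r th p -> `|app f p| <= Mx n r th f.
Proof.
case: p => p1 p2 [w [w0 [w1 [/= -> ->]]]].
have -> : app f (\sum_(i < 2 * n) w i * (rvert n r th i).1,
                 \sum_(i < 2 * n) w i * (rvert n r th i).2) =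
          \sum_(i < 2 * n) w i * app f (rvert n r th i).
  rewrite /app /= !mulr_sumr -big_split /=; apply: eq_bigr => i _; ring.
by apply: conv_bound => // i; apply: Mx_ge.
Qed.

Lemma V_in_B (R : realType) n (r th : R) (i : 'I_(2 * n)) :
  polyball n r th (rvert n r th i).
Proof.
exists (fun j => (j == i)%:R); split; first by move=> j; rewrite ler0n.
split; first by have := sum_ind i (fun _ => (1:R)); under eq_bigr => j _ do rewrite mulr1.
by rewrite !sum_ind.
Qed.

Lemma absorb_alg (R : realType) (p0 p1 x : R * R) :
  p0.1 * p1.2 - p0.2 * p1.1 != 0 ->
  exists t c0 c1 c2 c3, [/\ 0 < t, 0 <= c0, 0 <= c1, 0 <= c2 & 0 <= c3] /\
    c0 + c1 + c2 + c3 = 1 /\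
    x.1 / t = c0 * p0.1 + c1 * p1.1 + c2 * (- p0.1) + c3 * (- p1.1) /\
    x.2 / t = c0 * p0.2 + c1 * p1.2 + c2 * (- p0.2) + c3 * (- p1.2).
Proof.
move=> dz.
set a := (x.1 * p1.2 - x.2 * p1.1) / (p0.1 * p1.2 - p0.2 * p1.1).
set b := (p0.1 * x.2 - p0.2 * x.1) / (p0.1 * p1.2 - p0.2 * p1.1).
have t0 : 0 < `|a| + `|b| + 1 by rewrite ltr_wpDl ?addr_ge0.
set t := `|a| + `|b| + 1.
have tz : t != 0 by rewrite gt_eqF.
exists t, ((`|a| + a) / (2 * t) + 1 / (2 * t)), ((`|b| + b) / (2 * t)),
  ((`|a| - a) / (2 * t) + 1 / (2 * t)), ((`|b| - b) / (2 * t)).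
have h2t : 0 < 2 * t by rewrite mulr_gt0.
have ha1 : 0 <= `|a| + a by have := ler_norm (- a); rewrite normrN => h; lra.
have ha2 : 0 <= `|a| - a by rewrite subr_ge0 ler_norm.
have hb1 : 0 <= `|b| + b by have := ler_norm (- b); rewrite normrN => h; lra.
have hb2 : 0 <= `|b| - b by rewrite subr_ge0 ler_norm.
have h2t' : 0 <= 2 * t by apply: ltW.
split; first by split => //; (try apply: addr_ge0); apply: divr_ge0.
split.
  rewrite -!mulrDl.
  have -> : `|a| + a + 1 + (`|b| + b) + (`|a| - a + 1) + (`|b| - b) = 2 * t by rewrite /t; ring.
  by rewrite mulfV // mulf_neq0.

have ea : a * p0.1 + b * p1.1 = x.1 by rewrite /a /b; field.
have eb : a * p0.2 + b * p1.2 = x.2 by rewrite /a /b; field.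
clearbody t a b.
split; [rewrite -ea | rewrite -eb]; field; by rewrite tz.
Qed.


Lemma absorb (R : realType) n (r th : R) (x : R * R) : (2 <= n)%N -> 0 < r ->
  exists t, 0 < t /\ polyball n r th (x.1 / t, x.2 / t).
Proof.
move=> n2 r0; have n0 : (0 < n)%N by lia.
have nz : (n%:R : R) != 0 by rewrite pnatr_eq0 -lt0n.
have h0 : (0 < 2 * n)%N by lia.
have h1 : (1 < 2 * n)%N by lia.
have h2 : (n < 2 * n)%N by lia.
have h3 : (n.+1 < 2 * n)%N by lia.
set p0 := rvert n r th 0; set p1 := rvert n r th 1.
have E2 : rvert n r th n = (- p0.1, - p0.2) by have := Vshift r th 0 n0; rewrite add0n.
have E3 : rvert n r th n.+1 = (- p1.1, - p1.2) by have := Vshift r th 1 n0; rewrite add1n.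
have dz : p0.1 * p1.2 - p0.2 * p1.1 != 0.
  have -> : p0.1 * p1.2 - p0.2 * p1.1 = r ^+ 2 * sin (ang n th 1 - ang n th 0).
    by rewrite sinB /p0 /p1 /rvert /ang /=; ring.
  rewrite mulf_neq0 ?expf_neq0 ?gt_eqF //.
  have -> : ang n th 1 - ang n th 0 = pi / n%:R by rewrite /ang; field.
  apply: sin_gt0_pi; apply/andP; split; first by rewrite divr_gt0 ?pi_gt0 ?ltr0n.
  by rewrite ltr_pdivrMr ?ltr0n // ltr_pMr ?pi_gt0 // ltr1n.
have [t [c0 [c1 [c2 [c3 [[t0 g0 g1 g2 g3] [s1 [e1 e2]]]]]]]] := absorb_alg x dz.
exists t; split => //.
pose w := fun j : 'I_(2 * n) => c0 * (j == Ordinal h0)%:R + c1 * (j == Ordinal h1)%:R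
   + c2 * (j == Ordinal h2)%:R + c3 * (j == Ordinal h3)%:R.
exists w; split.
  by move=> j; rewrite /w !addr_ge0 // mulr_ge0 // ler0n.
split.
  have := sum4 (Ordinal h0) (Ordinal h1) (Ordinal h2) (Ordinal h3) c0 c1 c2 c3 (fun _ => 1).
  rewrite !mulr1 s1 => <-; apply: eq_bigr => j _; by rewrite mulr1.
have E2' : rvert n r th (Ordinal h2) = (- p0.1, - p0.2) := E2.
have E3' : rvert n r th (Ordinal h3) = (- p1.1, - p1.2) := E3.
rewrite /w !sum4 E2' E3'; split; [exact: e1 | exact: e2].
Qed.


Lemma app_div (R : realType) (f x : R * R) t : t != 0 ->
  app f x = t * app f (x.1 / t, x.2 / t).
Proof. move=> tz; rewrite /app /=; field; by rewrite tz. Qed.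

Lemma gauge_ge0 (R : realType) n (r th : R) x : (2 <= n)%N -> 0 < r ->
  0 <= gauge (polyball n r th) x.
Proof.
move=> n2 r0; have [t [t0 Bt]] := @absorb R n r th x n2 r0.
apply: lb_le_inf; first by exists t.
by move=> s [s0 _]; apply: ltW.
Qed.

Lemma Gmain (R : realType) n (r th : R) f x : (2 <= n)%N -> 0 < r ->
  `|app f x| <= Mx n r th f * gauge (polyball n r th) x.
Proof.
move=> n2 r0; have [t [t0 Bt]] := @absorb R n r th x n2 r0.
have key : forall s, 0 < s -> polyball n r th (x.1 / s, x.2 / s) ->
    `|app f x| <= s * Mx n r th f.
  move=> s s0 Bs; rewrite (@app_div R f x s (lt0r_neq0 s0)) normrM gtr0_norm //.
  by apply: ler_wpM2l; [apply: ltW | apply: inB_bound].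
have M0 := @Mx_ge0 R n r th f.
case: (eqVneq (Mx n r th f) 0) => [E|Mnz].
  by have := key t t0 Bt; rewrite E !mulr0 mul0r.
have Mp : 0 < Mx n r th f by rewrite lt_def Mnz.
rewrite mulrC -ler_pdivrMr //.
apply: lb_le_inf; first by exists t.
by move=> s [s0 Bs]; rewrite ler_pdivrMr // key.
Qed.

Lemma gauge_V_le1 (R : realType) n (r th : R) (i : 'I_(2 * n)) :
  gauge (polyball n r th) (rvert n r th i) <= 1.
Proof.
apply: ge_inf; first by exists 0 => s [s0 _]; apply: ltW.
by split => //; rewrite !divr1; case: (rvert n r th i) (V_in_B r th i).
Qed.

Lemma dnormE (R : realType) n (r th : R) f : (2 <= n)%N -> 0 < r ->
  dnorm (polyball n r th) f = Mx n r th f.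
Proof.
move=> n2 r0; have h0 : (0 < 2 * n)%N by lia.
have M0 := @Mx_ge0 R n r th f.
have ub : forall y, [set `|app f x| | x in [set x | gauge (polyball n r th) x <= 1]] y ->
    y <= Mx n r th f.
  move=> y [x /= gx <-]; apply: le_trans (@Gmain R n r th f x n2 r0) _.
  by apply: ler_piMr.
set S := [set `|app f x| | x in [set x | gauge (polyball n r th) x <= 1]].
have SV : forall i : 'I_(2 * n), S `|app f (rvert n r th i)|.
  by move=> i; exists (rvert n r th i) => //; apply: gauge_V_le1.
apply: le_anti; apply/andP; split.
  apply: ge_sup; first by exists `|app f (rvert n r th (Ordinal h0))|; apply: SV.
  exact: ub.
have [i0 _ Ei0] := eq_bigmax (Ordinal h0) xpredT
  (fun i : 'I_(2 * n) => `|app f (rvert n r th i)|) isT (fun i _ => normr_ge0 _).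
rewrite /Mx Ei0; apply: ub_le_sup; first by exists (Mx n r th f).
exact: SV.
Qed.


Lemma pair_eq (R : Type) (p q : R * R) : p.1 = q.1 -> p.2 = q.2 -> p = q.
Proof. by case: p q => ? ? [? ?] /= -> ->. Qed.

Lemma extreme_vert (R : realType) n (r th : R) x :
  extreme (polyball n r th) x -> exists i : 'I_(2 * n), x = rvert n r th i.
Proof.
case=> [[w [w0 [w1 [e1 e2]]]] ext].
have [i wi] : exists i, 0 < w i.
  case: (boolP [exists i, 0 < w i]) => [/existsP [i wi] | /existsPn H]; first by exists i.
  exfalso; move: w1; rewrite big1 => [/eqP|j _]; first by rewrite eq_sym oner_eq0.
  by apply: le_anti; rewrite w0 andbT leNgt H.
exists i.
have rest : \sum_(j < 2 * n | j != i) w j = 1 - w i.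
  by have := w1; rewrite (bigD1 i) //= => h; rewrite -h; ring.
have rest0 : 0 <= \sum_(j < 2 * n | j != i) w j by apply: sumr_ge0.
have wi1 : w i <= 1 by rewrite -subr_ge0 -rest.
have split1 : forall F : 'I_(2 * n) -> R, \sum_(j < 2 * n) w j * F j =
    w i * F i + \sum_(j < 2 * n | j != i) w j * F j.
  by move=> F; rewrite (bigD1 i).
case: (eqVneq (w i) 1) => [E|wn1].
  have z : forall j, j != i -> w j = 0.
    move=> j ji; move: rest; rewrite E subrr => h.
    exact: (psumr_eq0P (fun k _ => w0 k) h).
  have zs : forall F : 'I_(2 * n) -> R, \sum_(j < 2 * n | j != i) w j * F j = 0.
    by move=> F; apply: big1 => j ji; rewrite z // mul0r.
  by apply: pair_eq; rewrite ?e1 ?e2 split1 zs E mul1r addr0.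
have wlt : w i < 1 by rewrite lt_def eq_sym wn1.
have dz : 1 - w i != 0 by rewrite subr_eq0 eq_sym.
pose w' := fun j : 'I_(2 * n) => if j == i then 0 else w j / (1 - w i).
have key : forall F : 'I_(2 * n) -> R,
    (1 - w i) * \sum_(j < 2 * n) w' j * F j = \sum_(j < 2 * n | j != i) w j * F j.
  move=> F; rewrite mulr_sumr (bigD1 i) //= /w' eqxx mul0r mulr0 add0r.
  apply: eq_bigr => j /negbTE ->; field; exact: dz.
have Bz : polyball n r th (\sum_(j < 2 * n) w' j * (rvert n r th j).1,
                           \sum_(j < 2 * n) w' j * (rvert n r th j).2).
  exists w'; split.
    move=> j; rewrite /w'; case: (j == i) => //; apply: divr_ge0 => //.
    by rewrite subr_ge0.
  split=> //.
  apply: (mulfI dz); rewrite mulr1.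
  have := key (fun _ => 1); under eq_bigr => j _ do rewrite mulr1.
  by move=> ->; under eq_bigr => j _ do rewrite mulr1.
have xe : x = (w i * (rvert n r th i).1 + (1 - w i) *
                 (\sum_(j < 2 * n) w' j * (rvert n r th j).1),
               w i * (rvert n r th i).2 + (1 - w i) *
                 (\sum_(j < 2 * n) w' j * (rvert n r th j).2)).
  by apply: pair_eq; rewrite /= ?e1 ?e2 split1 key.
have E := ext (rvert n r th i) _ (w i) (V_in_B r th i) Bz wi wlt xe.
have E1 := f_equal fst E; have E2 := f_equal snd E; simpl in E1, E2.
by rewrite xe -E1 -E2; apply: pair_eq => /=; ring.
Qed.


Definition al (R : realType) (n : nat) : R := pi / (2 * n)%:R.

Lemma al_facts (R : realType) n : (2 <= n)%N ->
  [/\ 0 < al R n, al R n < pi / 2, 0 < cos (al R n), 0 < sin (al R n)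
    & pi / n%:R = 2 * al R n].
Proof.
move=> n2; have n0 : (0 < n)%N by lia.
have nz : (n%:R : R) != 0 by rewrite pnatr_eq0 -lt0n.
have a0 : 0 < al R n by rewrite /al divr_gt0 ?pi_gt0 // ltr0n muln_gt0.
have a1 : al R n < pi / 2.
  rewrite /al ltr_pM2l ?pi_gt0 // ltf_pV2 ?posrE ?ltr0n ?muln_gt0 //.
  have h : (2 < 2 * n)%N by lia.
  by move: h; rewrite -(ltr_nat R).
split => //.
- by apply: cos_gt0_pihalf; rewrite a1 andbT (lt_trans _ a0) // oppr_lt0 divr_gt0 ?pi_gt0.
- by apply: sin_gt0_pihalf; rewrite a1 a0.
- by rewrite /al natrM; field; rewrite nz.
Qed.

Lemma cos_odd2 (R : realType) n a b : (0 < n)%N -> odd (a + b) ->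
  `|cos ((a%:R - b%:R) * al R n)| <= cos (al R n).
Proof.
move=> n0 oab; case: (leqP b a) => ba.
  rewrite -natrB //; apply: cos_odd => //.
  by rewrite oddB // -oddD.
have ab : (a <= b)%N by apply: ltnW.
rewrite -opprB -natrB // mulNr cosN; apply: cos_odd => //.
by rewrite oddB // addbC -oddD.
Qed.

Definition Sv (R : realType) (n : nat) : R :=
  if odd n then sin ((n - 1)%:R * pi / (2 * n)%:R) else 1.

Lemma Sv_odd (R : realType) n : (2 <= n)%N -> odd n -> Sv R n = cos (al R n).
Proof.
move=> n2 on; rewrite /Sv on.
have n0 : (0 < n)%N by lia.
have nz : (n%:R : R) != 0 by rewrite pnatr_eq0 -lt0n.
have -> : (n - 1)%:R * pi / (2 * n)%:R = - (al R n - pi / 2).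
  rewrite natrB // /al natrM; field; by rewrite nz.
by rewrite sinN sinBpihalf opprK.
Qed.

Lemma Sv_ge0 (R : realType) n : (2 <= n)%N -> 0 <= Sv R n.
Proof.
move=> n2; case: (boolP (odd n)) => on.
  by rewrite Sv_odd //; have [] := al_facts R n2 => _ _ /ltW.
by rewrite /Sv (negbTE on).
Qed.

Lemma Sv_bound (R : realType) n k m : (2 <= n)%N ->
  `|sin ((k%:R - m%:R) * (2 * al R n))| <= Sv R n.
Proof.
move=> n2; have n0 : (0 < n)%N by lia.
have nz : (n%:R : R) != 0 by rewrite pnatr_eq0 -lt0n.
case: (boolP (odd n)) => on; last by rewrite /Sv (negbTE on) sin_max.
rewrite Sv_odd // -cosBpihalf.
have -> : (k%:R - m%:R) * (2 * al R n) - pi / 2 =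
    ((2 * k)%:R - (n + 2 * m)%:R) * al R n.
  rewrite /al !natrM natrD natrM; field; by rewrite nz.
apply: cos_odd2 => //.
by rewrite oddD oddD !oddM /= on.
Qed.

Lemma Sv_attain (R : realType) n : (2 <= n)%N ->
  sin ((n./2)%:R * (2 * al R n)) = Sv R n.
Proof.
move=> n2; have n0 : (0 < n)%N by lia.
have nz : (n%:R : R) != 0 by rewrite pnatr_eq0 -lt0n.
have hn := odd_double_half n.
case: (boolP (odd n)) => on.
  rewrite /Sv on; congr sin.
  have -> : (n - 1)%N = (n./2).*2 by move: hn; rewrite on; lia.
  by rewrite -muln2 natrM /al; field; rewrite nz.
rewrite /Sv (negbTE on).
have -> : (n./2)%:R * (2 * al R n) = pi / 2.
  have e : n = (n./2).*2 by move: hn; rewrite (negbTE on) add0n.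
  have h0 : (0 < n./2)%N by move: n0; rewrite {1}e -muln2; lia.
  set h := n./2 in e h0 *.
  rewrite /al e -muln2 !natrM; field.
  by rewrite pnatr_eq0 -lt0n h0.
exact: sin_pihalf.
Qed.


Definition Fn (R : realType) (psi rho : R) : R * R := (rho * cos psi, rho * sin psi).

Lemma app_Fn (R : realType) n (r th : R) psi rho k :
  app (Fn psi rho) (rvert n r th k) = rho * r * cos (ang n th k - psi).
Proof. rewrite app_rvert cosB /Fn /=; ring. Qed.

Lemma gauge_vert (R : realType) n (r th : R) (j : 'I_(2 * n)) : (2 <= n)%N -> 0 < r ->
  gauge (polyball n r th) (rvert n r th j) = 1.
Proof.
move=> n2 r0; apply: le_anti; rewrite gauge_V_le1 /=.
set f0 := Fn (ang n th j) (1 / r).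
have e : 1 / r * r = 1 by field; rewrite gt_eqF.
have M1 : Mx n r th f0 <= 1.
  apply: bigmax_le => // i _; by rewrite /f0 app_Fn e mul1r cos_max.
have a1 : app f0 (rvert n r th j) = 1 by rewrite /f0 app_Fn e subrr cos0 mulr1.
have := @Gmain R n r th f0 (rvert n r th j) n2 r0; rewrite a1 normr1 => h.
apply: le_trans h _; rewrite -[X in _ <= X]mul1r; apply: ler_wpM2r => //.
exact: gauge_ge0.
Qed.

Lemma ybound (R : realType) (c sn s y : R) : 0 < c -> 0 < sn -> c ^+ 2 + sn ^+ 2 = 1 ->
  (s = 1 \/ s = -1) ->
  `|s * (c ^+ 2 *+ 2 - 1) + y * ((c * sn) *+ 2)| <= 1 ->
  `|- s * (c ^+ 2 *+ 2 - 1) + y * ((c * sn) *+ 2)| <= 1 ->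
  `|y| <= sn / c.
Proof.
move=> c0 s0 e hs h1 h2.
rewrite ler_pdivlMr //.
have hc : `|c| = c by apply: gtr0_norm.
have -> : `|y| * c = `|y * c| by rewrite normrM hc.
move: h1 h2; rewrite !ler_norml => /andP[h1 h1'] /andP[h2 h2'].
have key : forall u : R, u * sn <= sn * sn -> u <= sn.
  by move=> u hu; rewrite -(ler_pM2r s0).
apply/andP; split.
  rewrite lerNl; apply: key.
  case: hs => -> in h1 h1' h2 h2'; nra.
apply: key; case: hs => -> in h1 h1' h2 h2'; nra.
Qed.

Definition Dv (R : realType) n : R := 2 * tan (al R n) * Sv R n.

Lemma Dv_ge0 (R : realType) n : (2 <= n)%N -> 0 <= Dv R n.
Proof.
move=> n2; have [a0 a1 c0 s0 _] := al_facts R n2.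
apply: mulr_ge0; last exact: Sv_ge0.
apply: mulr_ge0 => //; rewrite /tan divr_ge0 // ltW //.
Qed.


Lemma upper (R : realType) n (r th : R) (p f g : R * R) : (2 <= n)%N -> 0 < r ->
  gauge (polyball n r th) p = 1 ->
  Jset (polyball n r th) p f -> Jset (polyball n r th) p g ->
  Mx n r th (f.1 - g.1, f.2 - g.2) <= Dv R n.
Proof.
move=> n2 r0 gp [df af] [dg ag].
have n0 : (0 < n)%N by lia.
have [a0 a1 c0 s0 pin] := al_facts R n2.
rewrite dnormE // in df; rewrite dnormE // in dg.
rewrite gp in af ag.
set h := ((f.1 + g.1) / 2, (f.2 + g.2) / 2).
have ah : app h p = 1.
  have -> : app h p = (app f p + app g p) / 2 by rewrite /app /h /=; field.
  by rewrite af ag; field.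
have Mh : 1 <= Mx n r th h.
  by have := @Gmain R n r th h p n2 r0; rewrite ah gp normr1 mulr1.
have h0 : (0 < 2 * n)%N by lia.
have [m _ Em] := eq_bigmax (Ordinal h0) xpredT
  (fun i : 'I_(2 * n) => `|app h (rvert n r th i)|) isT (fun i _ => normr_ge0 _).
rewrite /Mx in Mh; rewrite Em /= in Mh.
have fm := @Mx_ge R n r th f m; have gm := @Mx_ge R n r th g m.
rewrite df in fm; rewrite dg in gm.
have ehfg : app h (rvert n r th m) = (app f (rvert n r th m) + app g (rvert n r th m)) / 2.
  by rewrite /app /h /=; field.
rewrite ehfg in Mh.
set u := app f (rvert n r th m) in fm Mh *.
set v := app g (rvert n r th m) in gm Mh *.
have [uv hs] : u = v /\ (u = 1 \/ u = -1).
  move: Mh fm gm.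
  rewrite !ler_norml ler_normr => hm /andP[? ?] /andP[? ?].
  case/orP: hm => ?; [split; [lra | left; lra] | split; [lra | right; lra]].
set am := ang n th m.
pose A (q : R * R) := q.1 * cos am + q.2 * sin am.
pose B (q : R * R) := q.2 * cos am - q.1 * sin am.
have dec : forall q k, app q (rvert n r th k) =
    r * (A q * cos (ang n th k - am) + B q * sin (ang n th k - am)).
  by move=> q k; rewrite app_rvert (decomp _ am).
have dm : forall q, app q (rvert n r th m) = r * A q.
  by move=> q; rewrite dec /am subrr cos0 sin0; ring.
have d1 : ang n th m.+1 - am = (al R n) *+ 2.
  by rewrite /am angB // -natr1 addrAC subrr add0r mul1r mulr_natl.
have d2 : ang n th (m + n - 1) - am = - ((al R n) *+ 2) + pi.
  rewrite /am angB // natrB; last by lia.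
  rewrite natrD -mulr_natl.
  have nz : (n%:R : R) != 0 by rewrite pnatr_eq0 -lt0n.
  rewrite /al natrM; field; by rewrite nz.
have yb : forall q, app q (rvert n r th m) = u -> Mx n r th q = 1 ->
    `|r * B q| <= sin (al R n) / cos (al R n).
  move=> q qu Mq.
  have v1 := @Vall R n r th q m.+1 n0; have v2 := @Vall R n r th q (m + n - 1) n0.
  rewrite Mq dec d1 in v1; rewrite Mq dec d2 in v2.
  rewrite cosDpi sinDpi cosN sinN opprK in v2.
  rewrite dm in qu.
  apply: (ybound c0 s0 (cos2Dsin2 _) hs).
    by rewrite -qu -cos_mulr2n -sin_mulr2n; move: v1; congr (_ <= _); congr `|_|; ring.
  by rewrite -qu -cos_mulr2n -sin_mulr2n; move: v2; congr (_ <= _); congr `|_|; ring.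
have yf := yb f erefl df.
have yg := yb g (esym uv) dg.
have Aeq : A f = A g.
  apply: (mulfI (lt0r_neq0 r0)); by rewrite -!dm.
apply: bigmax_le; first exact: Dv_ge0.
move=> k _.
have -> : app (f.1 - g.1, f.2 - g.2) (rvert n r th k) =
    (r * B f - r * B g) * sin (ang n th k - am).
  have -> : app (f.1 - g.1, f.2 - g.2) (rvert n r th k) =
      app f (rvert n r th k) - app g (rvert n r th k) by rewrite /app /=; ring.
  rewrite !dec Aeq; ring.
rewrite normrM /Dv /tan.
have -> : 2 * (sin (al R n) / cos (al R n)) * Sv R n =
   (sin (al R n) / cos (al R n) + sin (al R n) / cos (al R n)) * Sv R n by ring.
apply: ler_pM; [exact: normr_ge0 | exact: normr_ge0 | | ].
  by apply: le_trans (ler_normB _ _) _; apply: lerD.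
by rewrite /am angB //; apply: Sv_bound.
Qed.


Lemma J_Fn (R : realType) n (r th : R) (j : 'I_(2 * n)) psi : (2 <= n)%N -> 0 < r ->
  (forall k, `|cos (ang n th k - psi)| <= cos (al R n)) ->
  cos (ang n th j - psi) = cos (al R n) ->
  Jset (polyball n r th) (rvert n r th j) (Fn psi (1 / (r * cos (al R n)))).
Proof.
move=> n2 r0 hk hj.
have [a0 a1 c0 s0 pin] := al_facts R n2.
have e : forall k, app (Fn psi (1 / (r * cos (al R n)))) (rvert n r th k) =
    cos (ang n th k - psi) / cos (al R n).
  move=> k; rewrite app_Fn; field; by rewrite !gt_eqF.
have M1 : Mx n r th (Fn psi (1 / (r * cos (al R n)))) <= 1.
  apply: bigmax_le => // i _; rewrite e normrM normfV (gtr0_norm c0).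
  by rewrite ler_pdivrMr // mul1r.
have aj : app (Fn psi (1 / (r * cos (al R n)))) (rvert n r th j) = 1.
  by rewrite e hj divff // gt_eqF.
split; last by rewrite aj gauge_vert.
rewrite dnormE //; apply: le_anti; rewrite M1 /=.
by have := @Mx_ge R n r th (Fn psi (1 / (r * cos (al R n)))) j; rewrite aj normr1.
Qed.

Lemma lower (R : realType) n (r th : R) (j : 'I_(2 * n)) : (2 <= n)%N -> 0 < r ->
  exists f g, Jset (polyball n r th) (rvert n r th j) f /\
              Jset (polyball n r th) (rvert n r th j) g /\
              Dv R n <= Mx n r th (f.1 - g.1, f.2 - g.2).
Proof.
move=> n2 r0; have n0 : (0 < n)%N by lia.
have [a0 a1 c0 s0 pin] := al_facts R n2.
set a := al R n; set c := cos a.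
set fp := Fn (ang n th j + a) (1 / (r * c)).
set fm := Fn (ang n th j - a) (1 / (r * c)).
exists fp, fm; split.
  apply: J_Fn => //; last by rewrite opprD addrA subrr sub0r cosN.
  move=> k; have -> : ang n th k - (ang n th j + a) = ((2 * k)%:R - (2 * j + 1)%:R) * a.
    rewrite opprD addrA angB // [(2 * k)%:R]natrM [(2 * j + 1)%:R]natrD [(2 * j)%:R]natrM /a /al; ring.
  by apply: cos_odd2 => //; rewrite oddD oddD !oddM.
split.
  apply: J_Fn => //; last by rewrite (_ : ang n th j - (ang n th j - a) = a) //; ring.
  move=> k; have -> : ang n th k - (ang n th j - a) = ((2 * k + 1)%:R - (2 * j)%:R) * a.
    by rewrite (_ : ang n th k - (ang n th j - a) = (ang n th k - ang n th j) + a); [rewrite angB // [(2 * j)%:R]natrM [(2 * k + 1)%:R]natrD [(2 * k)%:R]natrM /a /al; ring | ring].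
  by apply: cos_odd2 => //; rewrite oddD oddD !oddM.
have ed : forall k, app (fp.1 - fm.1, fp.2 - fm.2) (rvert n r th k) =
    2 * tan a * sin (ang n th k - ang n th j).
  move=> k.
  have -> : app (fp.1 - fm.1, fp.2 - fm.2) (rvert n r th k) =
      app fp (rvert n r th k) - app fm (rvert n r th k) by rewrite /app /=; ring.
  rewrite !app_Fn.
  have -> : ang n th k - (ang n th j + a) = (ang n th k - ang n th j) - a by ring.
  have -> : ang n th k - (ang n th j - a) = (ang n th k - ang n th j) + a by ring.
  set phi := ang n th k - ang n th j.
  rewrite /c cosB cosD /tan; field; by rewrite !gt_eqF.
have tpos : 0 < tan a by rewrite /tan divr_gt0.
set hh := n./2.
have hhn : (hh <= n)%N by rewrite /hh leq_half_double -muln2; lia.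
have [k hk] : exists k : 'I_(2 * n), `|sin (ang n th k - ang n th j)| = Sv R n.
  case: (ltnP (j + hh) (2 * n)) => jh.
    exists (Ordinal jh); rewrite angB //= natrD addrAC subrr add0r /a Sv_attain //.
    by rewrite ger0_norm // Sv_ge0.
  have jlt := ltn_ord j.
  have jj : (j - hh < 2 * n)%N by lia.
  exists (Ordinal jj); rewrite angB //= natrB; last by lia.
  rewrite addrAC subrr add0r mulNr sinN normrN Sv_attain //.
  by rewrite ger0_norm // Sv_ge0.
apply: le_trans (@Mx_ge R n r th _ k).
rewrite ed normrM hk (ger0_norm (_ : 0 <= 2 * tan a)); last by rewrite mulr_ge0 // ltW.
by rewrite /Dv.
Qed.


Lemma sup_le_gen (R : realType) (E : set R) (D : R) : 0 <= D ->
  (forall e, E e -> e <= D) -> sup E <= D.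
Proof.
move=> D0 ub; have [E0|E0] := pselect (E !=set0); first exact: ge_sup.
have -> : E = set0.
  by apply/seteqP; split => x Ex //; exfalso; apply: E0; exists x.
by rewrite sup0.
Qed.

Lemma diam_ub (R : realType) n (r th : R) p : (2 <= n)%N -> 0 < r ->
  gauge (polyball n r th) p = 1 ->
  forall d, [set d | exists f g, Jset (polyball n r th) p f /\ Jset (polyball n r th) p g /\
            d = dnorm (polyball n r th) (f.1 - g.1, f.2 - g.2)] d -> d <= Dv R n.
Proof.
move=> n2 r0 gp d [f [g [Jf [Jg ->]]]].
rewrite dnormE //; exact: upper gp Jf Jg.
Qed.

Unset Implicit Arguments.

Theorem theorem5p1 (R : realType) (n : nat) (r th : R) (x : R * R) :
  (2 <= n)%N -> 0 < r -> extreme (polyball n r th) x ->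
  diamJ (polyball n r th) x = EX (polyball n r th) /\
  EX (polyball n r th) =
    (if odd n
     then 2 * tan (pi / (2 * n)%:R) * sin ((n - 1)%:R * pi / (2 * n)%:R)
     else 2 * tan (pi / (2 * n)%:R)).
Proof.
move=> n2 r0 ext.
have [j ->] := extreme_vert ext.
have gj := @gauge_vert R n r th j n2 r0.
have ubd : forall p, gauge (polyball n r th) p = 1 -> diamJ (polyball n r th) p <= Dv R n.
  move=> p gp; apply: sup_le_gen; first exact: Dv_ge0.
  exact: diam_ub.
have dj : diamJ (polyball n r th) (rvert n r th j) = Dv R n.
  apply: le_anti; rewrite ubd //=.
  have [f [g [Jf [Jg hD]]]] := @lower R n r th j n2 r0.
  apply: le_trans hD _; rewrite -dnormE //.
  apply: ub_le_sup; first by exists (Dv R n); exact: diam_ub.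
  by exists f, g.
have ex : EX (polyball n r th) = Dv R n.
  apply: le_anti; apply/andP; split.
    apply: sup_le_gen; first exact: Dv_ge0.
    by move=> e [p gp <-]; apply: ubd.
  rewrite -dj; apply: ub_le_sup.
    by exists (Dv R n); move=> e [p gp <-]; apply: ubd.
  by exists (rvert n r th j).
split; first by rewrite dj ex.
by rewrite ex /Dv /Sv /al; case: (odd n); rewrite ?mulr1.
Qed.
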